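(* For any finite quasi-discrete closure model $\mathcal{M}=((X,\mathcal{C}_R),\mathcal{V})$, any SLCS formula $\phi$ and any $x\in X$: $x\in\mathtt{Sat}(\mathcal{M},\phi)$ if and only if $\mathcal{M},x\models\phi$.
   Context: For $R\subseteq X\times X$, $\mathcal{C}_R(A)=A\cup\{x\mid\exists a\in A.(a,x)\in R\}$; a finite quasi-discrete closure model is $((X,\mathcal{C}_R),\mathcal{V})$ with $X$ finite and $\mathcal{V}:AP\to 2^X$. Paths are continuous maps $p:(\mathbb{N},\mathcal{C}_\succ)\to(X,\mathcal{C}_R)$, where $\succ=\{(n,n+1)\}$ and continuity means $p(\mathcal{C}_\succ(S))\subseteq\mathcal{C}_R(p(S))$ for all $S\subseteq\mathbb{N}$. SLCS formulas: $\Phi::=a\mid\top\mid\lnot\Phi\mid\Phi\land\Phi\mid\mathcal{N}\Phi\mid\Phi\,\mathcal{S}\,\Phi\mid\Phi\rightsquigarrow\Phi$. Semantics: $x\models a$ iff $x\in\mathcal{V}(a)$; boolean connectives classically; $x\models\mathcal{N}\phi$ iff $x\in\mathcal{C}_R(\{y\mid y\models\phi\})$; $x\models\phi_1\,\mathcal{S}\,\phi_2$ iff $x\models\phi_1$ and for every path $p$ with $p(0)=x$ and every $l\in\mathbb{N}$, if $p(l)\models\lnot\phi_1$ then some $k$ with $0<k\le l$ has $p(k)\models\phi_2$; $x\models\phi_1\rightsquigarrow\phi_2$ iff $x\models\phi_2$ and there exist $y$, a path $p$ and $l$ with $p(0)=y$, $p(l)=x$, $y\models\phi_1$ and $p(i)\models\phi_2$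 for all $0<i<l$. Let $\mathit{pre}(x)=\{y\mid(y,x)\in R\}$, $\mathit{post}(x)=\{y\mid(x,y)\in R\}$. The procedure $\mathtt{Sat}(\mathcal{M},\phi)$ is defined recursively: $\top\mapsto X$; $a\mapsto\mathcal{V}(a)$; $\lnot\phi_1\mapsto X\setminus\mathtt{Sat}(\mathcal{M},\phi_1)$; $\phi_1\land\phi_2\mapsto\mathtt{Sat}(\mathcal{M},\phi_1)\cap\mathtt{Sat}(\mathcal{M},\phi_2)$; $\mathcal{N}\phi_1\mapsto\mathcal{C}_R(\mathtt{Sat}(\mathcal{M},\phi_1))$. For $\phi_1\,\mathcal{S}\,\phi_2$: $V:=\mathtt{Sat}(\mathcal{M},\phi_1)$, $Q:=\mathtt{Sat}(\mathcal{M},\phi_2)$, $T:=\mathcal{C}_R(V\cup Q)\setminus(V\cup Q)$; while $T\neq\emptyset$: $T':=\emptyset$, for each $x\in T$ let $N:=\mathit{pre}(x)\cap V$, set $V:=V\setminus N$, $T':=T'\cup(N\setminus Q)$; then $T:=T'$; return $V$. For $\phi_1\rightsquigarrow\phi_2$: $V:=\mathtt{Sat}(\mathcal{M},\phi_1)$, $Q:=\mathtt{Sat}(\mathcal{M},\phi_2)$, $T:=\mathcal{C}_R(V)\cap Q$, $S:=T$, $Q:=Q\setminus T$; while $T\neq\emptyset$: $T':=\emptyset$, for each $x\in T$ set $T':=T'\cup(Q\cap\mathit{post}(x))$; then $Q:=Q\setminus T'$, $S:=S\cup T'$, $T:=T'$; return $S$. *)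

(* Defs.v *)
From mathcomp Require Import all_boot.
Set Implicit Arguments.
Unset Strict Implicit.
Unset Printing Implicit Defensive.

Definition clos {T : Type} (r : T -> T -> Prop) (A : T -> Prop) : T -> Prop :=
  fun x => A x \/ exists a, A a /\ r a x.

Definition succ_rel (n m : nat) : Prop := m = n.+1.

Section Model.
Variables (X : finType) (R : rel X).

(* Continuous map (nat, C_succ) -> (X, C_R):  p(C_succ(S)) ⊆ C_R(p(S)). *)
Definition is_path (p : nat -> X) : Prop :=
  forall (S : nat -> Prop) (y : X),
    (exists n, clos succ_rel S n /\ p n = y) ->
    clos (fun a b => R a b) (fun z => exists m, S m /\ p m = z) y.

Definition CRs (A : {set X}) : {set X} :=
  A :|: [set x | [exists a in A, R a x]].

Definition pre (x : X) : {set X} := [set y | R y x].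
Definition post (x : X) : {set X} := [set y | R x y].
End Model.

Inductive formula (AP : Type) : Type :=
  | FAtom of AP
  | FTop
  | FNot of formula AP
  | FAnd of formula AP & formula AP
  | FNear of formula AP
  | FSurr of formula AP & formula AP
  | FReach of formula AP & formula AP.

Arguments FTop {AP}.

Fixpoint models (X : finType) (R : rel X) (AP : Type) (V : AP -> {set X})
  (f : formula AP) : X -> Prop :=
  match f with
  | FAtom a => fun x => x \in V a
  | FTop => fun _ => True
  | FNot f1 => fun x => ~ models R V f1 x
  | FAnd f1 f2 => fun x => models R V f1 x /\ models R V f2 x
  | FNear f1 => clos (fun a b => R a b) (models R V f1)
  | FSurr f1 f2 => fun x =>
      models R V f1 x /\
      forall p : nat -> X, is_path R p -> p 0 = x ->
        forall l : nat, ~ models R V f1 (p l) ->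
          exists k, 0 < k <= l /\ models R V f2 (p k)
  | FReach f1 f2 => fun x =>
      models R V f2 x /\
      exists (y : X) (p : nat -> X) (l : nat),
        is_path R p /\ p 0 = y /\ p l = x /\ models R V f1 y /\
        forall i, 0 < i < l -> models R V f2 (p i)
  end.

Section Algo.
Variables (X : finType) (R : rel X).

(* body of the "for each x in T" loop for surrounded: state (V, T') *)
Definition surr_inner (Q : {set X}) (VT : {set X} * {set X}) (x : X)
  : {set X} * {set X} :=
  let N := pre R x :&: VT.1 in (VT.1 :\: N, VT.2 :|: (N :\: Q)).

(* while T <> ∅ loop, run with fuel (#|X|.+1 suffices) *)
Fixpoint surr_loop (fuel : nat) (Q V T : {set X}) : {set X} :=
  match fuel with
  | 0 => V
  | n.+1 =>
      if T == set0 then V else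
      let VT := foldl (surr_inner Q) (V, set0) (enum T) in
      surr_loop n Q VT.1 VT.2
  end.

Definition sat_surr (V Q : {set X}) : {set X} :=
  surr_loop #|X|.+1 Q V (CRs R (V :|: Q) :\: (V :|: Q)).

Fixpoint reach_loop (fuel : nat) (Q S T : {set X}) : {set X} :=
  match fuel with
  | 0 => S
  | n.+1 =>
      if T == set0 then S else
      let T' := foldl (fun T' x => T' :|: (Q :&: post R x)) set0 (enum T) in
      reach_loop n (Q :\: T') (S :|: T') T'
  end.

Definition sat_reach (V Q : {set X}) : {set X} :=
  let T := CRs R V :&: Q in
  reach_loop #|X|.+1 (Q :\: T) T T.
End Algo.

Fixpoint Sat (X : finType) (R : rel X) (AP : Type) (V : AP -> {set X})
  (f : formula AP) : {set X} :=
  match f with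
  | FAtom a => V a
  | FTop => setT
  | FNot f1 => ~: Sat R V f1
  | FAnd f1 f2 => Sat R V f1 :&: Sat R V f2
  | FNear f1 => CRs R (Sat R V f1)
  | FSurr f1 f2 => sat_surr R (Sat R V f1) (Sat R V f2)
  | FReach f1 f2 => sat_reach R (Sat R V f1) (Sat R V f2)
  end.

(* Main.v *)
Require Import Defs.
From mathcomp Require Import all_boot.
From Stdlib Require Import Classical.
Set Implicit Arguments.
Unset Strict Implicit.
Unset Printing Implicit Defensive.

Lemma is_pathP (X : finType) (R : rel X) (p : nat -> X) :
  is_path R p <-> forall n, p n.+1 = p n \/ R (p n) (p n.+1).
Proof.
split.
- move=> H n.
  have := H (fun m => m = n) (p n.+1).
  case.
  + exists n.+1; split=> //; right; exists n; split=> //.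
  + by case=> m [-> ->]; left.
  + by case=> a [[m [-> <-]] Ra]; right.
- move=> H S y [n [[Sn|[a [Sa ->]]] <-]].
  + by left; exists n.
  + case: (H a) => [->|Ra]; first by left; exists a.
    by right; exists (p a); split=> //; exists a.
Qed.

Lemma surr_fold (X : finType) (R : rel X) (Q : {set X}) (s : seq X) (V A : {set X}) :
  foldl (surr_inner R Q) (V, A) s =
  (V :\: [set y | has (R y) s], A :|: ((V :&: [set y | has (R y) s]) :\: Q)).
Proof.
elim: s V A => [|t s IH] V A /=.
  congr pair; apply/setP=> y; rewrite !inE ?andbF ?andbT ?orbF //.
rewrite /surr_inner /= IH; congr pair; apply/setP=> y; rewrite !inE.
  by case: (R y t); case: (y \in V); case: (has (R y) s).
by case: (R y t); case: (y \in V); case: (has (R y) s); case: (y \in Q); case: (y \in A).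
Qed.

Lemma reach_fold (X : finType) (R : rel X) (Q : {set X}) (s : seq X) (A : {set X}) :
  foldl (fun T' x => T' :|: (Q :&: post R x)) A s =
  A :|: (Q :&: [set y | has (fun t => R t y) s]).
Proof.
elim: s A => [|t s IH] A /=.
  by apply/setP=> y; rewrite !inE andbF orbF.
rewrite IH; apply/setP=> y; rewrite !inE.
by case: (R t y); case: (y \in Q); case: (has _ s); case: (y \in A).
Qed.

Lemma has_enum (X : finType) (T : {set X}) (P : pred X) :
  has P (enum T) = [exists t in T, P t].
Proof.
apply/hasP/existsP => [[t]|[t /andP[]]].
  by rewrite mem_enum => Ht Pt; exists t; rewrite Ht.
by move=> Ht Pt; exists t; rewrite ?mem_enum.
Qed.


Inductive rch (X : finType) (R : rel X) (T0 Q0 : {set X}) : X -> Prop :=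
| rch0 y : y \in T0 -> rch R T0 Q0 y
| rchS a b : rch R T0 Q0 a -> R a b -> b \in Q0 -> rch R T0 Q0 b.

Lemma reach_loopP (X : finType) (R : rel X) (T0 Q0 : {set X}) (fuel : nat) :
  forall Q S T : {set X},
  T0 \subset S -> T \subset S -> (forall x, x \in S -> rch R T0 Q0 x) ->
  Q = Q0 :\: S ->
  (forall a b, a \in S -> a \notin T -> R a b -> b \in Q0 -> b \in S) ->
  #|Q| + (T != set0) <= fuel ->
  forall x, x \in reach_loop R fuel Q S T <-> rch R T0 Q0 x.
Proof.
elim: fuel => [|n IH] Q S T H0 HT HS HQ Hcl Hf x /=.
- have HT0 : T == set0 by move: Hf; case: (T == set0); rewrite ?addn1.
  split; first exact: HS.
  elim=> [y /(subsetP H0)//|a b _ Ha Rab Qb].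
  apply: (Hcl a) => //; by rewrite (eqP HT0) inE.
- case: ifP => HT0.
  + split; first exact: HS.
    elim=> [y /(subsetP H0)//|a b _ Ha Rab Qb].
    apply: (Hcl a) => //; by rewrite (eqP HT0) inE.
  + rewrite reach_fold.
    set T' := set0 :|: _.
    have ET' : forall y, (y \in T') = (y \in Q) && [exists t in T, R t y].
      by move=> y; rewrite !inE has_enum.
    have T'Q : T' \subset Q by apply/subsetP=> y; rewrite ET' => /andP[].
    clearbody T'; apply: IH.
    * by apply: subset_trans H0 (subsetUl _ _).
    * exact: subsetUr.
    * move=> y; rewrite inE => /orP[/HS//|]; rewrite ET' => /andP[Qy /existsP[t /andP[Tt Rty]]].
      apply: (@rchS _ _ _ _ t); [apply: HS; exact: (subsetP HT)|by []|].
      by move: Qy; rewrite HQ inE => /andP[].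
    * by rewrite HQ; apply/setP=> y; rewrite !inE ET' HQ !inE; case: (y \in S); case: (y \in Q0); rewrite ?andbF ?andbT.
    * move=> a b; rewrite inE => /orP[Sa|]; last by move=> ->.
      move=> _ Rab Qb.
      case Ta: (a \in T); last by rewrite inE (Hcl a b Sa (negbT Ta)).
      case Sb: (b \in S); first by rewrite inE Sb.
      rewrite inE ET' HQ !inE Sb Qb /=.
      by apply/existsP; exists a; rewrite Ta.
    * have : #|Q| <= n by move: Hf; rewrite HT0 addn1.
      case: (T' =P set0) => [->|/eqP T'n].
      - by rewrite setD0 addn0.
      - rewrite addn1 => HQn; apply: leq_trans HQn.
        rewrite -(cardsID T' Q) (setIidPr T'Q) addnC.
        by rewrite -{1}(addn0 #|_|) ltn_add2l card_gt0.
Qed.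


Inductive bad (X : finType) (R : rel X) (V1 Q : {set X}) : X -> Prop :=
| bad0 y z : R y z -> z \notin V1 -> z \notin Q -> bad R V1 Q y
| badS y z : R y z -> z \notin Q -> bad R V1 Q z -> bad R V1 Q y.

Lemma bad_notin (X : finType) (R : rel X) (V1 Q V : {set X}) :
  V \subset V1 ->
  (forall y z, y \in V -> R y z -> z \notin Q -> z \notin V -> False) ->
  forall y, bad R V1 Q y -> y \notin V.
Proof.
move=> HV Hcl y; elim=> [a b Rab bV bQ|a b Rab bQ _ IH].
  apply/negP=> aV; apply: (Hcl a b aV Rab bQ).
  by apply/negP=> /(subsetP HV); rewrite (negbTE bV).
by apply/negP=> aV; apply: (Hcl a b aV Rab bQ IH).
Qed.

Lemma surr_loopP (X : finType) (R : rel X) (V1 Q : {set X}) (fuel : nat) :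
  forall V T : {set X},
  V \subset V1 -> (forall y, y \in V1 -> y \notin V -> bad R V1 Q y) ->
  (forall t, t \in T -> t \notin Q /\ (t \notin V1 \/ bad R V1 Q t)) ->
  (forall y z, y \in V -> R y z -> z \notin Q -> z \notin V -> z \in T) ->
  #|V| + (T != set0) <= fuel ->
  forall x, x \in surr_loop R fuel Q V T <-> x \in V1 /\ ~ bad R V1 Q x.
Proof.
have fin : forall V T : {set X}, V \subset V1 ->
  (forall y, y \in V1 -> y \notin V -> bad R V1 Q y) ->
  (forall y z, y \in V -> R y z -> z \notin Q -> z \notin V -> z \in T) ->
  T = set0 -> forall x, x \in V <-> x \in V1 /\ ~ bad R V1 Q x.
  move=> V T HV HB Hcl T0 x; split.
    move=> xV; split; first exact: (subsetP HV).
    move=> bx; suff : x \notin V by rewrite xV.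
    apply: (@bad_notin X R V1 Q V HV _ x bx) => y z yV Ryz zQ zV.
    by move: (Hcl y z yV Ryz zQ zV); rewrite T0 inE.
  case=> xV1 nb; case xV: (x \in V) => //.
  by case: nb; apply: HB; rewrite ?xV.
elim: fuel => [|n IH] V T HV HB HT Hcl Hf x /=.
- apply: (fin V T) => //.
  by apply/eqP; move: Hf; case: (T == set0); rewrite ?addn1.
- case: ifP => HT0; first by apply: (fin V T) => //; apply/eqP.
  rewrite surr_fold /=.
  set P := [set y | _].
  have EP : forall y, (y \in P) = [exists t in T, R y t] by move=> y; rewrite inE has_enum.
  clearbody P.
  have bP : forall y, y \in P -> bad R V1 Q y.
    move=> y; rewrite EP => /existsP[t /andP[Tt Ryt]].
    case: (HT t Tt) => tQ [tV1|bt]; first exact: (bad0 Ryt).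
    exact: (badS Ryt).
  apply: IH.
  + by apply: subset_trans HV; apply: subsetDl.
  + move=> y yV1; rewrite inE negb_and negbK => /orP[/bP//|yV].
    exact: HB.
  + move=> t; rewrite !inE /= => /and3P[tQ _ tP]; split=> //; right; exact: bP.
  + move=> y z; rewrite !inE => /andP[yP yV] Ryz zQ.
    rewrite negb_and negbK => /orP[zP|zV].
      rewrite zQ zP /=.
      case zV: (z \in V) => //.
      have := Hcl y z yV Ryz zQ (negbT zV).
      move=> zT; move: yP; rewrite EP => /existsP; case; exists z; by rewrite zT.
    have zT := Hcl y z yV Ryz zQ zV.
    move: yP; rewrite EP => /existsP; case; exists z; by rewrite zT.
  + have : #|V| <= n by move: Hf; rewrite HT0 addn1.
    case H': (_ == set0) => /=.
    * by rewrite addn0 => H; apply: leq_trans H; apply: subset_leq_card; apply: subsetDl.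
    * rewrite addn1 => HVn; apply: leq_trans HVn.
      case/set0Pn: (negbT H') => t; rewrite !inE /= => /and3P[_ tV tP].
      apply: proper_card; apply/properP; split; first exact: subsetDl.
      by exists t; rewrite // !inE tV tP.
Qed.


Lemma path_step (X : finType) (R : rel X) (p : nat -> X) :
  is_path R p -> forall n, p n.+1 = p n \/ R (p n) (p n.+1).
Proof. by move/is_pathP. Qed.

Lemma bad_path (X : finType) (R : rel X) (V1 Q : {set X}) y :
  bad R V1 Q y -> exists p l, is_path R p /\ p 0 = y /\ p l \notin V1 /\
     forall k, 0 < k <= l -> p k \notin Q.
Proof.
elim=> [{}y z Ryz zV zQ | {}y z Ryz zQ _ [p [l [Pp [p0 [pl Hk]]]]]].
- exists (fun i => if i == 0 then y else z), 1; split.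
    by apply/is_pathP => -[|n] /=; [right|left].
  split=> //; split=> // -[|[|k]] //.
- exists (fun i => if i == 0 then y else p i.-1), l.+1; split.
    apply/is_pathP => -[|n] /=; first by rewrite p0; right.
    by case: (path_step Pp n) => ->; [left|right].
  split=> //; split=> // -[|k] // /andP[_ kl] /=.
  case: k kl => [|k] kl /=; first by rewrite p0.
  by apply: Hk.
Qed.

Lemma surr_sem (X : finType) (R : rel X) (V1 Q : {set X}) x :
  (x \in V1 /\ forall p, is_path R p -> p 0 = x -> forall l, ~ (p l \in V1) ->
      exists k, 0 < k <= l /\ p k \in Q) <-> x \in V1 /\ ~ bad R V1 Q x.
Proof.
split.
- case=> xV H; split=> // /bad_path [p [l [Pp [p0 [pl Hk]]]]].
  have [k [kl pk]] := H p Pp p0 l (negP pl).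
  by move: (Hk k kl); rewrite pk.
- case=> xV nb; split=> // p Pp p0 l pl.
  apply: NNPP => nk.
  have E : forall d i, i + d = l -> bad R V1 Q (p i) \/ p i \notin V1.
    elim=> [|d IHd] i Hi; first by right; move: Hi; rewrite addn0 => ->; apply/negP.
    have := IHd i.+1 ltac:(by rewrite addSnnS).
    have qi : p i.+1 \notin Q.
      apply/negP => H; apply: nk; exists i.+1; split=> //.
      by rewrite -Hi addnS !ltnS leq_addr.
    case: (path_step Pp i) => [<-//|Rst].
    by case=> [b|nv]; left; [exact: (badS Rst qi b)|exact: (bad0 Rst nv qi)].
  case: (E l 0 (add0n l)); rewrite p0 //.
  by rewrite xV.
Qed.

Lemma reach_sem (X : finType) (R : rel X) (V1 Q : {set X}) x :
  (x \in Q /\ exists y p l, is_path R p /\ p 0 = y /\ p l = x /\ y \in V1 /\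
      forall i, 0 < i < l -> p i \in Q) <-> rch R (CRs R V1 :&: Q) Q x.
Proof.
split.
- case=> xQ [y [p [l [Pp [p0 [pl [yV Hi]]]]]]].
  have HQ : forall i, 0 < i <= l -> p i \in Q.
    move=> i /andP[i0 il]; case: (ltngtP i l) il => // [il|->] _; last by rewrite pl.
    by apply: Hi; rewrite i0.
  case: l pl Hi HQ => [|l] pl Hi HQ.
    by apply: rch0; rewrite -pl p0 !inE yV /= -p0 pl xQ.
  have : forall i, i <= l -> rch R (CRs R V1 :&: Q) Q (p i.+1).
    elim=> [|i IH] il.
      case: (path_step Pp 0) => [E|R01]; apply: rch0; rewrite !inE.
        by rewrite E p0 yV /= -p0 -E; apply: HQ.
      rewrite HQ // andbT; apply/orP; right; apply/existsP; exists y.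
      by rewrite yV -p0.
    have := IH (ltnW il).
    case: (path_step Pp i.+1) => [->//|Rst] H.
    by apply: (rchS H Rst); apply: HQ.
  by move=> /(_ l (leqnn l)); rewrite pl.
- elim=> [y | a b _ [aQ [y [p [l [Pp [p0 [pl [yV Hi]]]]]]]] Rab bQ].
  + rewrite !inE => /andP[/orP[yV|/existsP[a /andP[aV Ray]]] yQ]; split=> //.
      exists y, (fun _ => y), 0; split; first by apply/is_pathP; left.
      by split=> //; split=> //; split=> // -[|i].
    exists a, (fun i => if i == 0 then a else y), 1; split.
      by apply/is_pathP => -[|n] /=; [right|left].
    by split=> //; split=> //; split=> // -[|[|i]].
  + split=> //; exists y, (fun i => if i <= l then p i else b), l.+1; split.
      apply/is_pathP => n /=.
      case: (ltngtP n l) => [nl|ln|->].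
      * exact: path_step.
      * by left.
      * by rewrite pl; right.
    split=> //; split; first by rewrite ltnn.
    split=> // i /andP[i0 il]; rewrite ltnS in il; rewrite il.
    case: (ltngtP i l) il => // [il|->] _; last by rewrite pl.
    by apply: Hi; rewrite i0.
Qed.


Theorem theorem6p3 (X : finType) (R : rel X) (AP : Type)
  (V : AP -> {set X}) (phi : formula AP) (x : X) :
  x \in Sat R V phi <-> models R V phi x.
Proof.
elim: phi x => [a|| f IH| f1 IH1 f2 IH2| f IH| f1 IH1 f2 IH2| f1 IH1 f2 IH2] x /=.
- by [].
- by rewrite inE.
- by rewrite inE; split=> [/negP H /IH|H]; [|apply/negP => /IH].
- rewrite inE; split=> [/andP[/IH1 ? /IH2 ?]//|[/IH1 -> /IH2 ->]//].
- rewrite /CRs /clos !inE; split.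
    case/orP=> [/IH|/existsP[a /andP[/IH ? ?]]]; [by left|by right; exists a].
  case=> [/IH ->//|[a [/IH Ha Rax]]]; apply/orP; right; apply/existsP; exists a.
  by rewrite Ha.
- rewrite /sat_surr.
  set S1 := Sat R V f1; set S2 := Sat R V f2.
  apply: iff_trans; first apply: (surr_loopP (V1 := S1)).
  + exact: subxx.
  + by move=> y ->.
  + by move=> t; rewrite !inE negb_or => /andP[/andP[? ?] _]; split=> //; left.
  + move=> y z yV Ryz zQ zV; rewrite !inE negb_or zQ zV /=.
    apply/orP; right; apply/existsP; exists y; by rewrite inE yV.
  + by rewrite -addn1 leq_add ?max_card //; case: (_ != _).
  apply: iff_trans; first exact: iff_sym (surr_sem _ _ _ _).
  split.
  * case=> /IH1 H1 H; split=> // p Pp p0 l nl.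
    have [k [kl pk]] := H p Pp p0 l (fun h => nl (proj1 (IH1 _) h)).
    by exists k; split=> //; apply/IH2.
  * case=> /IH1 H1 H; split=> // p Pp p0 l nl.
    have [k [kl pk]] := H p Pp p0 l (fun h => nl (proj2 (IH1 _) h)).
    by exists k; split=> //; apply/IH2.
- rewrite /sat_reach.
  set S1 := Sat R V f1; set S2 := Sat R V f2.
  apply: iff_trans; first apply: (reach_loopP (T0 := CRs R S1 :&: S2) (Q0 := S2)).
  + exact: subxx.
  + exact: subxx.
  + by move=> y; apply: rch0.
  + by [].
  + by move=> a b ->.
  + by rewrite -addn1 leq_add ?max_card //; case: (_ != _).
  apply: iff_trans; first exact: iff_sym (reach_sem _ _ _ _).
  split.
  * case=> /IH2 H2 [y [p [l [Pp [p0 [pl [yV Hi]]]]]]]; split=> //.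
    exists y, p, l; do 4 (split=> //); first by apply/IH1.
    by move=> i /Hi /IH2.
  * case=> /IH2 H2 [y [p [l [Pp [p0 [pl [yV Hi]]]]]]]; split=> //.
    exists y, p, l; do 4 (split=> //); first by apply/IH1.
    by move=> i /Hi /IH2.
Qed.
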